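(* Let $d\geq 2$, energies $E_1\leq\dots\leq E_d$, inverse temperatures $\alpha>\beta\geq0$, $\gamma_k=e^{-\alpha E_k}/\sum_i e^{-\alpha E_i}$, $\Gamma_k=e^{-\beta E_k}/\sum_i e^{-\beta E_i}$, and assume $\gamma_1>\frac12$ and $\Gamma_1<\Gamma_d+\Gamma_{d-1}$. Let $\mathbf{p}$ be a probability vector with $p_k/\gamma_k\geq p_{k+1}/\gamma_{k+1}$ for all $k$. Then $\mathbf{p}\succ_{\boldsymbol{\Gamma}}\mathbf{q}\succ_{\boldsymbol{\gamma}}\mathbf{r}$, where $$q_1=p_d+\frac{\Gamma_1-\Gamma_d}{\Gamma_{d-1}}p_{d-1},\quad q_k=\frac{\Gamma_k}{1-\Gamma_1}(1-q_1),\qquad r_1=1-\frac{1-\gamma_1}{\gamma_1}q_1,\quad r_k=\frac{\gamma_k}{\gamma_1}q_1,$$ for $k>1$. Moreover, $r_k/\gamma_k\geq r_{k+1}/\gamma_{k+1}$ for all $k$.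
   Context: For a full-support probability vector $\mathbf{g}$, $\mathbf{p}\succ_{\mathbf{g}}\mathbf{q}$ (thermomajorisation) means: ordering indices by a permutation $\pi$ with $p_{\pi_i}/g_{\pi_i}$ non-increasing in $i$, the piecewise linear curve through $\left(\sum_{i\leq j}g_{\pi_i},\sum_{i\leq j}p_{\pi_i}\right)$, $j=0,\dots,d$, is nowhere below the analogous curve of $\mathbf{q}$. *)

(* Defs.v *)
From mathcomp Require Import all_boot all_order all_algebra.
From mathcomp Require Import reals.
From mathcomp Require Import sequences exp.
From mathcomp Require Import fingroup perm.
Set Implicit Arguments. Unset Strict Implicit. Unset Printing Implicit Defensive.
Import Order.TTheory GRing.Theory Num.Theory.
Local Open Scope ring_scope.

Section Thermo.
Variables (R : realType) (d : nat).

Definition gibbs (b : R) (E : 'I_d -> R) (k : 'I_d) : R :=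
  expR (- (b * E k)) / \sum_(i < d) expR (- (b * E i)).

Definition prob_vec (p : 'I_d -> R) : Prop :=
  (forall i, 0 <= p i) /\ \sum_(i < d) p i = 1.

Definition beta_ordering (g p : 'I_d -> R) (pi : {perm 'I_d}) : Prop :=
  forall i j : 'I_d, (i <= j)%N -> p (pi j) / g (pi j) <= p (pi i) / g (pi i).

Definition xbreak (g : 'I_d -> R) (pi : {perm 'I_d}) (i : 'I_d) : R :=
  \sum_(k < d | (k < i)%N) g (pi k).

Definition clamp01 (t : R) : R := Num.min 1 (Num.max 0 t).

(* The piecewise linear curve through the points
   (\sum_{i<=j} g_{pi i}, \sum_{i<=j} p_{pi i}), j = 0..d, evaluated at x:
   the i-th segment has horizontal extent g_{pi i} and rise p_{pi i}. *)
Definition curve (g p : 'I_d -> R) (pi : {perm 'I_d}) (x : R) : R :=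
  \sum_(i < d) p (pi i) * clamp01 ((x - xbreak g pi i) / g (pi i)).

Definition thermomaj (g p q : 'I_d -> R) : Prop :=
  exists (pi sigma : {perm 'I_d}),
    beta_ordering g p pi /\ beta_ordering g q sigma /\
    forall x : R, 0 <= x <= \sum_(i < d) g i ->
      curve g q sigma x <= curve g p pi x.

End Thermo.

(* Main.v *)
Require Import Defs.
From mathcomp Require Import all_boot all_order all_algebra.
From mathcomp Require Import reals.
From mathcomp Require Import sequences exp.
From mathcomp Require Import fingroup perm.
From mathcomp Require Import ring lra zify.
Import Order.TTheory GRing.Theory Num.Theory.
Local Open Scope ring_scope.


Ltac mm := repeat (match goal with
  | |- context[Num.max ?a ?b] => case: (leP a b) => ?
  | |- context[Num.min ?a ?b] => case: (leP a b) => ?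
  end).

Lemma clampE {R : realType} (u : R) : clamp01 u = Num.min 1 (Num.max 0 u).
Proof. by []. Qed.

Lemma clamp_ge0 {R : realType} (u : R) : 0 <= clamp01 u.
Proof. rewrite /clamp01; mm; lra. Qed.
Lemma clamp_le1 {R : realType} (u : R) : clamp01 u <= 1.
Proof. rewrite /clamp01; mm; lra. Qed.
Lemma clamp_le0 {R : realType} (u : R) : u <= 0 -> clamp01 u = 0.
Proof. rewrite /clamp01 => hu; mm; lra. Qed.
Lemma clamp_ge1 {R : realType} (u : R) : 1 <= u -> clamp01 u = 1.
Proof. rewrite /clamp01 => hu; mm; lra. Qed.
Lemma clamp_id {R : realType} (u : R) : 0 <= u <= 1 -> clamp01 u = u.
Proof. rewrite /clamp01 => /andP[h1 h2]; mm; lra. Qed.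
Lemma clamp_mono {R : realType} (u v : R) : u <= v -> clamp01 u <= clamp01 v.
Proof. rewrite /clamp01 => huv; mm; lra. Qed.

Lemma gclamp0 {R : realType} (g b x : R) : 0 < g -> x <= b -> g * clamp01 ((x - b) / g) = 0.
Proof.
move=> g0 h; have gi : 0 < g^-1 by rewrite invr_gt0.
rewrite clamp_le0 ?mulr0 //; apply: mulr_le0_ge0; lra.
Qed.
Lemma gclamp1 {R : realType} (g b x : R) : 0 < g -> b + g <= x -> g * clamp01 ((x - b) / g) = g.
Proof.
move=> g0 h.
rewrite clamp_ge1 ?mulr1 // ler_pdivlMr //; lra.
Qed.
Lemma gclampm {R : realType} (g b x : R) : 0 < g -> b <= x -> x <= b + g -> g * clamp01 ((x - b) / g) = x - b.
Proof.
move=> g0 h1 h2.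
rewrite clamp_id; first by rewrite mulrC divfK // gt_eqF.
rewrite divr_ge0 ?ler_pdivrMr //=; lra.
Qed.

Lemma telesc {R : realType} (f : nat -> R) (hf : forall k, 0 < f k) (x : R) (hx : 0 <= x) (m : nat) :
  \sum_(i < m) f i * clamp01 ((x - \sum_(k < i) f k) / f i) =
  Num.min (\sum_(k < m) f k) x.
Proof.
elim: m => [|m IH]; first by rewrite !big_ord0 /=; case: (leP 0 x); lra.
rewrite big_ord_recr /= IH big_ord_recr /=.
set S := \sum_(k < m) f k.
have := hf m => fm.
case: (leP x S) => h1.
  rewrite gclamp0 //; case: (leP (S + f m) x) => h2; lra.
case: (leP (S + f m) x) => h2.
  rewrite gclamp1 //; lra.
rewrite gclampm //; lra.
Qed.


Definition ff {R : realType} {m : nat} (g : 'I_m.+1 -> R) (pi : {perm 'I_m.+1}) (k : nat) : R :=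
  g (pi (inord k)).

Lemma xbreakE {R : realType} {m : nat} (g : 'I_m.+1 -> R) (pi : {perm 'I_m.+1}) (i : 'I_m.+1) :
  xbreak g pi i = \sum_(k < i) ff g pi k.
Proof.
rewrite /xbreak (big_ord_widen m.+1 (ff g pi) (ltnW (ltn_ord i))).
by apply: eq_bigr => k _; rewrite /ff inord_val.
Qed.

Lemma ffpos {R : realType} {m : nat} (g : 'I_m.+1 -> R) (pi : {perm 'I_m.+1}) :
  (forall i, 0 < g i) -> forall k, 0 < ff g pi k.
Proof. by move=> gp k; apply: gp. Qed.

Lemma Fmono {R : realType} (f : nat -> R) (hf : forall k, 0 < f k) (j j' : nat) :
  (j <= j')%N -> \sum_(k < j) f k <= \sum_(k < j') f k.
Proof.
elim: j' => [|j' IH]; first by rewrite leqn0 => /eqP ->.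
rewrite leq_eqVlt => /orP[/eqP -> //|].
rewrite ltnS => /IH h; rewrite big_ord_recr /=; have := hf j'; lra.
Qed.

Lemma Fge0 {R : realType} (f : nat -> R) (hf : forall k, 0 < f k) (j : nat) :
  0 <= \sum_(k < j) f k.
Proof. by apply: sumr_ge0 => k _; apply: ltW. Qed.

Lemma Ftot {R : realType} {m : nat} (g : 'I_m.+1 -> R) (pi : {perm 'I_m.+1}) :
  \sum_(k < m.+1) ff g pi k = \sum_i g i.
Proof.
rewrite [RHS](reindex_inj (@perm_inj _ pi)) /=.
by apply: eq_bigr => k _; rewrite /ff inord_val.
Qed.

Lemma xb_ge0 {R : realType} {m : nat} (g : 'I_m.+1 -> R) (pi : {perm 'I_m.+1}) :
  (forall i, 0 < g i) -> forall i, 0 <= xbreak g pi i.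
Proof. by move=> gp i; rewrite xbreakE; apply: Fge0; apply: ffpos. Qed.

Lemma xb_succ {R : realType} {m : nat} (g : 'I_m.+1 -> R) (pi : {perm 'I_m.+1}) (i : 'I_m.+1) :
  xbreak g pi i + g (pi i) = \sum_(k < i.+1) ff g pi k.
Proof. by rewrite xbreakE big_ord_recr /= /ff inord_val. Qed.

Lemma xb_lt {R : realType} {m : nat} (g : 'I_m.+1 -> R) (pi : {perm 'I_m.+1}) :
  (forall i, 0 < g i) -> forall i j : 'I_m.+1, (i < j)%N ->
  xbreak g pi i + g (pi i) <= xbreak g pi j.
Proof.
move=> gp i j ij; rewrite xb_succ xbreakE; apply: Fmono => //; exact: ffpos.
Qed.

Lemma xb_top {R : realType} {m : nat} (g : 'I_m.+1 -> R) (pi : {perm 'I_m.+1}) :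
  (forall i, 0 < g i) -> forall i : 'I_m.+1,
  xbreak g pi i + g (pi i) <= \sum_j g j.
Proof.
move=> gp i; rewrite xb_succ -(Ftot g pi); apply: Fmono => //; exact: ffpos.
Qed.

Lemma sum_h {R : realType} {m : nat} (g : 'I_m.+1 -> R) (pi : {perm 'I_m.+1}) :
  (forall i, 0 < g i) -> forall x, 0 <= x <= \sum_j g j ->
  \sum_i g (pi i) * clamp01 ((x - xbreak g pi i) / g (pi i)) = x.
Proof.
move=> gp x /andP[x0 x1].
have -> : \sum_i g (pi i) * clamp01 ((x - xbreak g pi i) / g (pi i)) =
  \sum_(i < m.+1) ff g pi i * clamp01 ((x - \sum_(k < i) ff g pi k) / ff g pi i).
  by apply: eq_bigr => i _; rewrite xbreakE /ff inord_val.
rewrite telesc //; last exact: ffpos.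
rewrite Ftot; case: leP => //; lra.
Qed.

Lemma term_lo {R : realType} (vv gg B a y c : R) : 0 < gg -> a <= y ->
  (B < y -> a < B + gg -> c * gg <= vv) ->
  c * gg * (clamp01 ((y - B) / gg) - clamp01 ((a - B) / gg)) <=
  vv * (clamp01 ((y - B) / gg) - clamp01 ((a - B) / gg)).
Proof.
move=> g0 ay H; have gi : 0 < gg^-1 by rewrite invr_gt0.
have mono : clamp01 ((a - B) / gg) <= clamp01 ((y - B) / gg).
  apply: clamp_mono; apply: ler_wpM2r; [exact: ltW | lra].
case: (leP y B) => h1.
  have e : clamp01 ((y - B) / gg) = 0.
    apply: clamp_le0; apply: mulr_le0_ge0; lra.
  have := clamp_ge0 ((a - B) / gg) => h.
  have -> : clamp01 ((y - B) / gg) - clamp01 ((a - B) / gg) = 0 by lra.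
  by rewrite !mulr0.
case: (leP (B + gg) a) => h2.
  have e : clamp01 ((a - B) / gg) = 1.
    by apply: clamp_ge1; rewrite ler_pdivlMr //; lra.
  have := clamp_le1 ((y - B) / gg) => h.
  have -> : clamp01 ((y - B) / gg) - clamp01 ((a - B) / gg) = 0 by lra.
  by rewrite !mulr0.
apply: ler_wpM2r; [lra | exact: H].
Qed.

Lemma term_hi {R : realType} (vv gg B a y c : R) : 0 < gg -> a <= y ->
  (B < y -> a < B + gg -> vv <= c * gg) ->
  vv * (clamp01 ((y - B) / gg) - clamp01 ((a - B) / gg)) <=
  c * gg * (clamp01 ((y - B) / gg) - clamp01 ((a - B) / gg)).
Proof.
move=> g0 ay H; have gi : 0 < gg^-1 by rewrite invr_gt0.
have mono : clamp01 ((a - B) / gg) <= clamp01 ((y - B) / gg).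
  apply: clamp_mono; apply: ler_wpM2r; [exact: ltW | lra].
case: (leP y B) => h1.
  have e : clamp01 ((y - B) / gg) = 0.
    apply: clamp_le0; apply: mulr_le0_ge0; lra.
  have := clamp_ge0 ((a - B) / gg) => h.
  have -> : clamp01 ((y - B) / gg) - clamp01 ((a - B) / gg) = 0 by lra.
  by rewrite !mulr0.
case: (leP (B + gg) a) => h2.
  have e : clamp01 ((a - B) / gg) = 1.
    by apply: clamp_ge1; rewrite ler_pdivlMr //; lra.
  have := clamp_le1 ((y - B) / gg) => h.
  have -> : clamp01 ((y - B) / gg) - clamp01 ((a - B) / gg) = 0 by lra.
  by rewrite !mulr0.
apply: ler_wpM2r; [lra | exact: H].
Qed.

Lemma curve_diff {R : realType} {m : nat} (g v : 'I_m.+1 -> R) (pi : {perm 'I_m.+1}) (a y : R) :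
  curve g v pi y - curve g v pi a =
  \sum_i v (pi i) * (clamp01 ((y - xbreak g pi i) / g (pi i)) -
                     clamp01 ((a - xbreak g pi i) / g (pi i))).
Proof. by rewrite /curve -sumrB; apply: eq_bigr => i _; rewrite mulrBr. Qed.

Lemma lin_diff {R : realType} {m : nat} (g : 'I_m.+1 -> R) (pi : {perm 'I_m.+1}) (a y c : R) :
  (forall i, 0 < g i) -> 0 <= a -> a <= y -> y <= \sum_j g j ->
  \sum_i c * g (pi i) * (clamp01 ((y - xbreak g pi i) / g (pi i)) -
                     clamp01 ((a - xbreak g pi i) / g (pi i))) = c * (y - a).
Proof.
move=> gp a0 ay yS.
under eq_bigr do rewrite -mulrA mulrBr.
rewrite -mulr_sumr sumrB (sum_h _ _ gp) ?(sum_h _ _ gp) //; apply/andP; split; lra.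
Qed.

Lemma slope_lo {R : realType} {m : nat} (g v : 'I_m.+1 -> R) (pi : {perm 'I_m.+1}) (a y c : R) :
  (forall i, 0 < g i) -> 0 <= a -> a <= y -> y <= \sum_j g j ->
  (forall i, xbreak g pi i < y -> a < xbreak g pi i + g (pi i) ->
     c <= v (pi i) / g (pi i)) ->
  c * (y - a) <= curve g v pi y - curve g v pi a.
Proof.
move=> gp a0 ay yS H.
rewrite curve_diff -(lin_diff g pi a y c gp a0 ay yS).
apply: ler_sum => i _; apply: term_lo => //.
by move=> h1 h2; rewrite -ler_pdivlMr //; apply: H.
Qed.

Lemma slope_hi {R : realType} {m : nat} (g v : 'I_m.+1 -> R) (pi : {perm 'I_m.+1}) (a y c : R) :
  (forall i, 0 < g i) -> 0 <= a -> a <= y -> y <= \sum_j g j ->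
  (forall i, xbreak g pi i < y -> a < xbreak g pi i + g (pi i) ->
     v (pi i) / g (pi i) <= c) ->
  curve g v pi y - curve g v pi a <= c * (y - a).
Proof.
move=> gp a0 ay yS H.
rewrite curve_diff -(lin_diff g pi a y c gp a0 ay yS).
apply: ler_sum => i _; apply: term_hi => //.
by move=> h1 h2; rewrite -ler_pdivrMr //; apply: H.
Qed.

Lemma curve0 {R : realType} {m : nat} (g v : 'I_m.+1 -> R) (pi : {perm 'I_m.+1}) :
  (forall i, 0 < g i) -> curve g v pi 0 = 0.
Proof.
move=> gp; apply: big1 => i _.
have := xb_ge0 g pi gp i; have := gp (pi i) => h1 h2.
rewrite clamp_le0 ?mulr0 //; apply: mulr_le0_ge0; first lra.
by rewrite invr_ge0 ltW.
Qed.

Lemma curveS {R : realType} {m : nat} (g v : 'I_m.+1 -> R) (pi : {perm 'I_m.+1}) :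
  (forall i, 0 < g i) -> curve g v pi (\sum_j g j) = \sum_j v j.
Proof.
move=> gp; rewrite [RHS](reindex_inj (@perm_inj _ pi)) /=.
apply: eq_bigr => i _.
have := xb_top g pi gp i; have := gp (pi i) => h1 h2.
rewrite clamp_ge1 ?mulr1 // ler_pdivlMr //; lra.
Qed.


Lemma seg {R : realType} {m : nat} (g v : 'I_m.+1 -> R) (pi : {perm 'I_m.+1}) :
  (forall i, 0 < g i) -> beta_ordering g v pi -> forall x : R,
  exists c, (forall i, xbreak g pi i < x -> c <= v (pi i) / g (pi i)) /\
            (forall i, x < xbreak g pi i + g (pi i) -> v (pi i) / g (pi i) <= c).
Proof.
move=> gp ho x.
case: (boolP [exists i : 'I_m.+1, xbreak g pi i < x]) => [/existsP[i0 hi0]|/existsPn hn].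
  pose P k := (k < m.+1)%N && (xbreak g pi (inord k) < x).
  have exP : exists k, P k by exists i0; rewrite /P ltn_ord inord_val.
  have ubP : forall k, P k -> (k <= m)%N by move=> k /andP[].
  case: (ex_maxnP exP ubP) => J /andP[HJ1 HJ2] HJmax.
  exists (v (pi (inord J)) / g (pi (inord J))); split.
    move=> i hi; apply: ho.
    have : P i by rewrite /P ltn_ord inord_val.
    by move/HJmax; rewrite inordK.
  move=> i hi; apply: ho; rewrite inordK //.
  case: (leqP J i) => // iJ; exfalso.
  have := xb_lt g pi gp i (inord J); rewrite inordK // => /(_ iJ); lra.
exists (v (pi ord0) / g (pi ord0)); split.
  by move=> i hi; move: (hn i); rewrite hi.
by move=> i _; apply: ho.
Qed.

Lemma TP {R : realType} {m : nat} (g v : 'I_m.+1 -> R) (pi : {perm 'I_m.+1})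
  (y0 Y A B : R) :
  (forall i, 0 < g i) -> beta_ordering g v pi ->
  \sum_j g j = 1 -> \sum_j v j = 1 ->
  0 <= y0 -> y0 <= 1 -> Y <= curve g v pi y0 -> A * y0 = Y -> 1 - B * (1 - y0) = Y ->
  forall x : R, 0 <= x -> x <= 1 ->
  (x <= y0 -> A * x <= curve g v pi x) /\ (y0 <= x -> 1 - B * (1 - x) <= curve g v pi x).
Proof.
move=> gp ho S1 V1 y00 y01 HY HA HB x x0 x1.
have [c [c1 c2]] := seg g v pi gp ho x.
have C0 := curve0 g v pi gp.
have C1 : curve g v pi 1 = 1 by rewrite -{1}S1 curveS.
have L0 : c * (x - 0) <= curve g v pi x - curve g v pi 0.
  apply: slope_lo => //; first by rewrite S1.
  by move=> i h1 _; apply: c1.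
split => hx.
  have U : curve g v pi y0 - curve g v pi x <= c * (y0 - x).
    apply: slope_hi => //; first by rewrite S1.
    by move=> i _ h2; apply: c2.
  case: (leP A c) => hc; nra.
have U2 : curve g v pi 1 - curve g v pi x <= c * (1 - x).
  apply: slope_hi => //; first by rewrite S1.
  by move=> i _ h2; apply: c2.
have L2 : c * (x - y0) <= curve g v pi x - curve g v pi y0.
  apply: slope_lo => //; first by rewrite S1.
  by move=> i h1 _; apply: c1.
case: (leP c B) => hc; nra.
Qed.

Lemma sort_perm {R : realType} {m : nat} (g v : 'I_m.+1 -> R) :
  exists pi : {perm 'I_m.+1}, beta_ordering g v pi.
Proof.
pose key (i : 'I_m.+1) := v i / g i.
pose leT : rel 'I_m.+1 := fun i j => key j <= key i.
have tot : total leT by move=> i j; rewrite /leT le_total.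
have tr : transitive leT by move=> j i k; rewrite /leT => h1 h2; apply: le_trans h2 h1.
have rf : reflexive leT by move=> i; rewrite /leT.
pose s := sort leT (enum 'I_m.+1).
have ss : size s = m.+1 by rewrite size_sort size_enum_ord.
have us : uniq s by rewrite sort_uniq enum_uniq.
pose f (i : 'I_m.+1) := nth ord0 s i.
have finj : injective f.
  move=> i j /eqP; rewrite /f nth_uniq ?ss ?ltn_ord // => /eqP; exact: val_inj.
exists (perm finj) => i j ij; rewrite !permE /f.
have := sorted_leq_nth tr rf ord0 (sort_sorted tot (enum 'I_m.+1)).
by move/(_ i j); rewrite !inE ss !ltn_ord => /(_ isT isT ij).
Qed.


Lemma Zpos {R : realType} {n : nat} (b : R) (E : 'I_n.+1 -> R) :
  0 < \sum_(i < n.+1) expR (- (b * E i)).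
Proof.
rewrite (bigD1 ord0) //=; have := expR_gt0 (- (b * E ord0)).
have : 0 <= \sum_(i < n.+1 | i != ord0) expR (- (b * E i)).
  by apply: sumr_ge0 => i _; apply: ltW; apply: expR_gt0.
lra.
Qed.

Lemma gibbs_pos {R : realType} {n : nat} (b : R) (E : 'I_n.+1 -> R) k :
  0 < gibbs b E k.
Proof. by rewrite /gibbs divr_gt0 ?expR_gt0 ?Zpos. Qed.

Lemma gibbs_sum {R : realType} {n : nat} (b : R) (E : 'I_n.+1 -> R) :
  \sum_k gibbs b E k = 1.
Proof. by rewrite /gibbs -mulr_suml divff // gt_eqF ?Zpos. Qed.

Lemma gibbs_mono {R : realType} {n : nat} (b : R) (E : 'I_n.+1 -> R) i j :
  0 <= b -> E i <= E j -> gibbs b E j <= gibbs b E i.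
Proof.
move=> b0 h; rewrite /gibbs; apply: ler_wpM2r.
  by rewrite invr_ge0 ltW ?Zpos.
rewrite ler_expR; nra.
Qed.

Lemma gibbs_ratio {R : realType} {n : nat} (a b : R) (E : 'I_n.+1 -> R) i j :
  b <= a -> E i <= E j -> gibbs a E j * gibbs b E i <= gibbs a E i * gibbs b E j.
Proof.
move=> ba h; rewrite /gibbs.
set Za := \sum_(i < n.+1) _; set Zb := \sum_(i < n.+1) _.
have Za0 : 0 < Za by apply: Zpos.
have Zb0 : 0 < Zb by apply: Zpos.
rewrite mulrACA [X in _ <= X]mulrACA ler_pM2r ?mulr_gt0 ?invr_gt0 //.
rewrite -!expRD ler_expR; nra.
Qed.


Lemma ar_prod {R : realType} (a b a' b' : R) : 0 <= a -> a <= a' -> 0 <= b -> b <= b' -> a * b <= a' * b'.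
Proof. move=> a0 aa b0 bb; apply: (le_trans (ler_wpM2r b0 aa)); apply: ler_wpM2l => //; lra. Qed.

Lemma ar_q {R : realType} (q G c : R) : 0 < G -> G < 1 ->
  1 - (1 - q) <= c * (1 - (1 - G)) -> c * ((1 - G) - 0) <= (1 - q) - 0 -> q <= G.
Proof. move=> *; nra. Qed.

Lemma ar_st {R : realType} (q G : R) : 0 < G -> G < 1 -> q <= G -> q * (1 - G) <= (1 - q) * G.
Proof. move=> *; nra. Qed.

Lemma nat1 (n : nat) : n != n.+1.
Proof. by apply/eqP; lia. Qed.

Lemma nat2 (n i : nat) : i != n.+1 -> i != n -> (i < n.+2)%N -> (i < n)%N.
Proof. lia. Qed.

Lemma nat3 (n i j : nat) : (i <= j)%N -> (j < n.+2)%N -> i = n.+1 -> j = n.+1.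
Proof. lia. Qed.

Lemma ar_r {R : realType} (q g : R) : 0 < g -> q <= g -> q / g <= (1 - (1 - g) / g * q) / g.
Proof.
move=> g0 h; rewrite ler_pM2r ?invr_gt0 // mulrAC.
have : (1 - g) * q / g <= 1 - q by rewrite ler_pdivrMr //; nra.
lra.
Qed.

Lemma nat4 (i j : nat) : (i <= j)%N -> j = 0%N -> i = 0%N.
Proof. lia. Qed.

Theorem lemma17 (R : realType) (n : nat)
  (E : 'I_n.+2 -> R) (alpha beta : R) (p : 'I_n.+2 -> R) :
  (forall i j : 'I_n.+2, (i <= j)%N -> E i <= E j) ->
  0 <= beta -> beta < alpha ->
  let gam := @gibbs R n.+2 alpha E in
  let Gam := @gibbs R n.+2 beta E in
  let i1 : 'I_n.+2 := inord 0 in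
  let id : 'I_n.+2 := inord n.+1 in
  let id1 : 'I_n.+2 := inord n in
  gam i1 > 1 / 2 ->
  Gam i1 < Gam id + Gam id1 ->
  prob_vec p ->
  (forall k : 'I_n.+2, (k.+1 < n.+2)%N ->
     p (inord k.+1) / gam (inord k.+1) <= p k / gam k) ->
  let q1 := p id + (Gam i1 - Gam id) / Gam id1 * p id1 in
  let q : 'I_n.+2 -> R := fun k =>
    if k == i1 then q1 else Gam k / (1 - Gam i1) * (1 - q1) in
  let r : 'I_n.+2 -> R := fun k =>
    if k == i1 then 1 - (1 - gam i1) / gam i1 * q1 else gam k / gam i1 * q1 in
  thermomaj Gam p q /\ thermomaj gam q r /\
  (forall k : 'I_n.+2, (k.+1 < n.+2)%N ->
     r (inord k.+1) / gam (inord k.+1) <= r k / gam k).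
Proof.
move=> HE hb hab gam Gam i1 id id1 hg1 hG1 [p0 p1] hpord q1 q r.
have vi1 : nat_of_ord i1 = 0%N by rewrite /i1 inordK.
have vid : nat_of_ord id = n.+1 by rewrite /id inordK.
have vid1 : nat_of_ord id1 = n by rewrite /id1 inordK // ltnW.
have gpos : forall k, 0 < gam k by move=> k; apply: gibbs_pos.
have Gpos : forall k, 0 < Gam k by move=> k; apply: gibbs_pos.
have gsum : \sum_k gam k = 1 by apply: gibbs_sum.
have Gsum : \sum_k Gam k = 1 by apply: gibbs_sum.
have hGid : Gam id <= Gam i1 by apply: gibbs_mono => //; apply: HE; rewrite vi1.
have ratio : forall i j : 'I_n.+2, (i <= j)%N -> gam j * Gam i <= gam i * Gam j.
  by move=> i j ij; apply: gibbs_ratio; [exact: ltW | exact: HE].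
have hGg : Gam i1 <= gam i1.
  have : \sum_j gam j * Gam i1 <= \sum_j gam i1 * Gam j.
    by apply: ler_sum => j _; apply: ratio; rewrite vi1.
  by rewrite -mulr_suml -mulr_sumr gsum Gsum mul1r mulr1.
have pchain : forall i j : 'I_n.+2, (i <= j)%N -> p j / gam j <= p i / gam i.
  pose F k := p (inord k) / gam (inord k).
  have adj : forall k, (k.+1 < n.+2)%N -> F k.+1 <= F k.
    move=> k hk; have := hpord (inord k); rewrite /F inordK //; last by apply: ltnW.
    by apply.
  have ch : forall i j, (i <= j)%N -> (j < n.+2)%N -> F j <= F i.
    move=> i j; elim: j => [|j IH]; first by rewrite leqn0 => /eqP ->.
    rewrite leq_eqVlt => /orP[/eqP -> //|]; rewrite ltnS => ij hj.
    apply: le_trans (adj j hj) (IH ij (ltnW hj)).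
  move=> i j ij; have := ch i j ij (ltn_ord j); by rewrite /F !inord_val.
have ho_p : beta_ordering Gam p 1%g.
  move=> i j ij; rewrite !perm1.
  have a1 := pchain i j ij.
  have a0 : 0 <= p j / gam j by rewrite divr_ge0 // ltW.
  have b1 : gam j / Gam j <= gam i / Gam i.
    rewrite ler_pdivrMr // mulrAC ler_pdivlMr //; exact: ratio.
  have b0 : 0 <= gam j / Gam j by rewrite divr_ge0 // ltW.
  have -> : p j / Gam j = p j / gam j * (gam j / Gam j).
    by rewrite mulrA divfK // gt_eqF.
  have -> : p i / Gam i = p i / gam i * (gam i / Gam i).
    by rewrite mulrA divfK // gt_eqF.
  exact: ar_prod.
set XB := xbreak Gam 1%g.
have hxid : XB id = 1 - Gam id.
  have := xb_succ Gam 1%g id; rewrite vid Ftot Gsum perm1 -/XB; lra.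
have hxid1 : XB id1 + Gam id1 = XB id.
  have := xb_succ Gam 1%g id1; rewrite perm1 vid1 -/XB => ->.
  by rewrite /XB xbreakE vid.
have hxlt : forall i : 'I_n.+2, (i < n)%N -> XB i + Gam i <= XB id1.
  move=> i hi; have := xb_lt Gam 1%g Gpos i id1; rewrite perm1 vid1; exact.
have hGi1 : Gam i1 < 1.
  have := xb_lt Gam 1%g Gpos i1 id; rewrite perm1 vid vi1 -/XB => /(_ isT).
  have := xb_ge0 Gam 1%g Gpos i1; rewrite -/XB; have := Gpos id; lra.
set x0 := 1 - Gam i1.
have nid : id1 != id by rewrite -val_eqE /= vid vid1 nat1.
have Cx0 : curve Gam p 1%g x0 = 1 - q1.
  rewrite /curve; under eq_bigr do rewrite perm1.
  have -> : \sum_i p i * clamp01 ((x0 - xbreak Gam 1%g i) / Gam i) =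
     \sum_i p i - \sum_i p i * (1 - clamp01 ((x0 - XB i) / Gam i)).
    by rewrite -sumrB; apply: eq_bigr => i _; rewrite mulrBr mulr1; ring.
  rewrite p1 (bigD1 id) //= (bigD1 id1) //= big1 ?addr0; last first.
    move=> i /andP[h1 h2].
    have hi : (i < n)%N.
      move: h1 h2; rewrite -!val_eqE /= vid vid1 => h1 h2.
      move: h1 h2 (ltn_ord i); exact: nat2.
    have := hxlt i hi; have := Gpos i => g0 h.
    rewrite clamp_ge1 ?subrr ?mulr0 // ler_pdivlMr // /x0; lra.
  have c0 : clamp01 ((x0 - XB id) / Gam id) = 0.
    apply: clamp_le0; apply: mulr_le0_ge0; first by rewrite /x0; lra.
    by rewrite invr_ge0 ltW.
  have e : x0 - XB id1 = Gam id1 - (Gam i1 - Gam id) by rewrite /x0; lra.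
  have c1 : clamp01 ((x0 - XB id1) / Gam id1) = 1 - (Gam i1 - Gam id) / Gam id1.
    rewrite e mulrBl divff ?gt_eqF //; apply: clamp_id.
    have : 0 <= (Gam i1 - Gam id) / Gam id1 by rewrite divr_ge0 ?subr_ge0 // ltW.
    have : (Gam i1 - Gam id) / Gam id1 < 1 by rewrite ltr_pdivrMr //; lra.
    move=> h1 h2; apply/andP; split; lra.
  rewrite c0 c1 /q1; ring.
have x00 : 0 <= x0 by rewrite /x0; lra.
have x01 : x0 <= 1 by rewrite /x0; have := Gpos i1; lra.
have C1 : curve Gam p 1%g 1 = 1 by rewrite -{1}Gsum curveS.
have C0 := curve0 Gam p 1%g Gpos.
have [hq1 hq0] : q1 <= Gam i1 /\ 0 <= q1.
  have [c [c1 c2]] := seg Gam p 1%g Gpos ho_p x0.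
  have U : curve Gam p 1%g 1 - curve Gam p 1%g x0 <= c * (1 - x0).
    apply: slope_hi => //; first by rewrite Gsum.
    by move=> i _ h2; apply: c2.
  have L : c * (x0 - 0) <= curve Gam p 1%g x0 - curve Gam p 1%g 0.
    apply: slope_lo => //; first by rewrite Gsum.
    by move=> i h1 _; apply: c1.
  rewrite C1 Cx0 C0 /x0 in U L.
  have := Gpos i1 => g0.
  split; first by apply: (@ar_q _ q1 (Gam i1) c g0 hGi1); lra.
  rewrite /q1; apply: addr_ge0 => //; apply: mulr_ge0 => //.
  by rewrite divr_ge0 ?subr_ge0 // ltW.
have G1pos : 0 < 1 - Gam i1 by lra.
set s1 := (1 - q1) / (1 - Gam i1).
set t1 := q1 / Gam i1.
have hst : t1 <= s1.
  rewrite /t1 /s1 ler_pdivrMr // mulrAC ler_pdivlMr //; exact: ar_st.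
have qrat : forall k, q k / Gam k = if k == i1 then t1 else s1.
  move=> k; rewrite /q; case: (k == i1) / eqP => [->|hk] //.
  rewrite /s1; field; rewrite ?gt_eqF //.
pose sig := tperm i1 id.
have sig_eq : forall i, (sig i == i1) = (i == id).
  by move=> i; rewrite /sig -{2}(tpermR i1 id) (inj_eq perm_inj).
have ho_q : beta_ordering Gam q sig.
  move=> i j ij; rewrite !qrat !sig_eq.
  case: (j =P id) => hj; case: (i =P id) => hi //; try exact: hst.
  exfalso; apply: hj; apply: val_inj => /=; rewrite vid.
  move: ij (ltn_ord j) (erefl n.+1); rewrite hi vid; exact: nat3.
have qsum : \sum_k q k = 1.
  rewrite (bigD1 i1) //= {1}/q eqxx.
  have -> : \sum_(k | k != i1) q k = \sum_(k | k != i1) Gam k * ((1 - q1) / (1 - Gam i1)).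
    apply: eq_bigr => k hk; rewrite /q (negbTE hk); by rewrite mulrAC -mulrA.
  rewrite -mulr_suml.
  have : \sum_k Gam k = Gam i1 + \sum_(k | k != i1) Gam k by rewrite (bigD1 i1).
  rewrite Gsum => hs.
  have -> : \sum_(k | k != i1) Gam k = 1 - Gam i1 by lra.
  rewrite mulrC divfK ?gt_eqF //; ring.
have part1 : thermomaj Gam p q.
  exists 1%g, sig; split => //; split => //.
  move=> x /andP[x0' x1']; rewrite Gsum in x1'.
  have D0 := curve0 Gam q sig Gpos.
  have D1 : curve Gam q sig 1 = 1 by rewrite -{1}Gsum curveS.
  have DA : curve Gam q sig x - curve Gam q sig 0 <= s1 * (x - 0).
    apply: slope_hi => //; first by rewrite Gsum.
    by move=> i _ _; rewrite qrat; case: ifP.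
  have DB : t1 * (1 - x) <= curve Gam q sig 1 - curve Gam q sig x.
    apply: slope_lo => //; first by rewrite Gsum.
    by move=> i _ _; rewrite qrat; case: ifP.
  have eA : s1 * x0 = 1 - q1 by rewrite /s1 /x0 divfK // gt_eqF.
  have eB : 1 - t1 * (1 - x0) = 1 - q1.
    by rewrite /t1 /x0 (_ : 1 - (1 - Gam i1) = Gam i1) ?divfK ?gt_eqF //; ring.
  have hY : 1 - q1 <= curve Gam p 1%g x0 by rewrite Cx0.
  have [TA TB] := TP Gam p 1%g x0 (1 - q1) s1 t1 Gpos ho_p Gsum p1
     x00 x01 hY eA eB x x0' x1'.
  rewrite D0 D1 in DA DB.
  case: (leP x x0) => hx; [have := TA hx | have := TB (ltW hx)]; lra.
split; first exact: part1.
have hq1g : q1 <= gam i1 := le_trans hq1 hGg.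
have gi1 : gam i1 <= 1.
  rewrite -gsum (bigD1 i1) //= lerDl; apply: sumr_ge0 => k _; exact: ltW.
set r1 := 1 - (1 - gam i1) / gam i1 * q1.
set R0 := r1 / gam i1.
set t2 := q1 / gam i1.
have ht2 : t2 <= R0 by apply: ar_r.
have rrat : forall k, r k / gam k = if k == i1 then R0 else t2.
  move=> k; rewrite /r; case: (k == i1) / eqP => [->|hk] //.
  rewrite /t2; field; rewrite ?gt_eqF //.
have ho_r : beta_ordering gam r 1%g.
  move=> i j ij; rewrite !perm1 !rrat.
  case: (j =P i1) => hj; case: (i =P i1) => hi //; try exact: ht2.
  exfalso; apply: hi; apply: val_inj => /=; rewrite vi1.
  by move: ij; rewrite hj vi1 leqn0 => /eqP.
split; last first.
  move=> k hk; have := ho_r k (inord k.+1); rewrite !perm1 inordK //; apply.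
  exact: leqnSn.
have rsum : \sum_k r k = 1.
  rewrite (bigD1 i1) //= {1}/r eqxx.
  have -> : \sum_(k | k != i1) r k = \sum_(k | k != i1) gam k * t2.
    apply: eq_bigr => k hk; by rewrite /r (negbTE hk) /t2 mulrAC -mulrA.
  rewrite -mulr_suml.
  have : \sum_k gam k = gam i1 + \sum_(k | k != i1) gam k by rewrite (bigD1 i1).
  rewrite gsum => hs.
  have -> : \sum_(k | k != i1) gam k = 1 - gam i1 by lra.
  rewrite /r1 /t2; ring.
have [sig2 ho2] := sort_perm gam q.
exists sig2, 1%g; split => //; split => //.
move=> x /andP[x0' x1']; rewrite gsum in x1'.
have D0 := curve0 gam r 1%g gpos.
have D1 : curve gam r 1%g 1 = 1 by rewrite -{1}gsum curveS.
have DA : curve gam r 1%g x - curve gam r 1%g 0 <= R0 * (x - 0).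
  apply: slope_hi => //; first by rewrite gsum.
  by move=> i _ _; rewrite rrat; case: ifP.
have DB : t2 * (1 - x) <= curve gam r 1%g 1 - curve gam r 1%g x.
  apply: slope_lo => //; first by rewrite gsum.
  by move=> i _ _; rewrite rrat; case: ifP.
have eA : R0 * gam i1 = r1 by rewrite /R0 divfK // gt_eqF.
have eB : 1 - t2 * (1 - gam i1) = r1 by rewrite /t2 /r1; ring.
have Cq1 : curve gam q sig2 1 = 1 by rewrite -{1}gsum curveS.
have hY : r1 <= curve gam q sig2 (gam i1).
  have U : curve gam q sig2 1 - curve gam q sig2 (gam i1) <= t2 * (1 - gam i1).
    apply: slope_hi => //; first exact: ltW; first by rewrite gsum.
    move=> i h1 h2.
    pose j := (sig2^-1)%g i1.
    have hsj : sig2 j = i1 by rewrite /j permKV.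
    have rj : q (sig2 j) / gam (sig2 j) = t2 by rewrite hsj /q eqxx.
    case: (leP (q (sig2 i) / gam (sig2 i)) t2) => // hgt; exfalso.
    case: (leqP j i) => ji.
      have := ho2 j i ji; rewrite rj; lra.
    have := xb_lt gam sig2 gpos i j ji.
    have := xb_top gam sig2 gpos j; rewrite hsj gsum; lra.
  lra.
have [TA TB] := TP gam q sig2 (gam i1) r1 R0 t2 gpos ho2 gsum qsum
   (ltW (gpos i1)) gi1 hY eA eB x x0' x1'.
rewrite D0 D1 in DA DB.
case: (leP x (gam i1)) => hx; [have := TA hx | have := TB (ltW hx)]; lra.
Qed.
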